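(* Let $\alpha\ge 2$, let $\gamma_t,\gamma_r>0$, and let $a,b>0$. Let $\beta_t,\beta_r,D_t,D_r>0$, and suppose there exist real numbers $\nu>0$, $\mu_1,\mu_2\ge 0$ and $\lambda$ satisfying the stationarity conditions $$(2^{\gamma_t}-1)\,\mu_1\,\frac{a\,D_t^{\alpha}}{\beta_t^{2}}=\lambda,\qquad (2^{\gamma_r}-1)\,\mu_2\,\frac{b\,D_r^{\alpha}}{\beta_r^{2}}=\lambda,\qquad \mu_1=\nu,\qquad \mu_2=(2^{\gamma_t}-1)\mu_1+\nu .$$ Define $|h_t|^2=\dfrac{\beta_t}{a\,D_t^{\alpha}}$ and $|h_r|^2=\dfrac{\beta_r}{b\,D_r^{\alpha}}$. Then $$|h_t|^2\le |h_r|^2 \iff \beta_r\le \frac{2^{\gamma_t}\,(2^{\gamma_r}-1)}{2^{\gamma_t}-1}\,\beta_t .$$ Symmetrically (roles of $t$ and $r$ exchanged): if instead $(2^{\gamma_r}-1)\mu_1 bD_r^{\alpha}/\beta_r^2=\lambda$, $(2^{\gamma_t}-1)\mu_2 aD_t^{\alpha}/\beta_t^2=\lambda$, $\mu_1=\nu>0$, $\mu_2=(2^{\gamma_r}-1)\mu_1+\nu$, then $|h_t|^2\ge |h_r|^2\iff \beta_t\le \dfrac{2^{\gamma_r}(2^{\gamma_t}-1)}{2^{\gamma_r}-1}\beta_r$.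
   Context: Setting: an access point (AP) serves a transmitted user $t$ and a reflected user $r$ via a simultaneously transmitting and reflecting reconfigurable intelligent surface (STAR-RIS) using NOMA. For user $k\in\{t,r\}$, $\beta_k\in(0,1]$ is the energy-splitting (amplitude-squared) coefficient with $\beta_t+\beta_r=1$, $D_k$ is the distance from the STAR-RIS to user $k$, $\alpha=\alpha_{RU}$ the path-loss exponent, $\gamma_k$ the rate requirement, $p_k$ the transmit power, and $a=\sigma^2/(\rho_0 c_t)$, $b=\sigma^2/(\rho_0 c_r)$ with $\sigma^2,\rho_0,c_t,c_r>0$ constants, so that the effective channel power gains are $\rho_0\beta_kc_k/D_k^\alpha$ (proportional to the quantities $|h_k|^2$ above). The stated stationarity conditions are those of the Lagrangian $\nu(p_t+p_r-P_{\max})+\lambda(\beta_t+\beta_r-1)+\mu_1[(2^{\gamma_t}-1)(aD_t^\alpha/\beta_t+p_r)-p_t]+\mu_2[(2^{\gamma_r}-1)bD_r^\alpha/\beta_r-p_r]$ with respect to $\beta_t,\beta_r,p_t,p_r$, arising from the NOMA QoS constraints when user $r$ performs successive interference cancellation (decoding order $\lambda(r)=1$); the symmetric case corresponds to decoding order $\lambda(t)=1$. The lemma says that, at such stationary points, the SIC decoding-order constraint is equivalent to a linear constraint in $(\beta_t,\beta_r)$. *)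

(* Defs.v *)
From Stdlib Require Export Reals.
Open Scope R_scope.

(* Effective channel power gains (up to the common factor rho0/sigma^2):
   |h_t|^2 = beta_t / (a D_t^alpha),  |h_r|^2 = beta_r / (b D_r^alpha). *)
Definition hgain (beta c D alpha : R) : R := beta / (c * Rpower D alpha).

(* Main.v *)
Require Import Defs.
From Stdlib Require Import Reals Lra Psatz.
Open Scope R_scope.

Lemma key (K L A B bt br : R) : 0 < K -> 0 < L -> 0 < A -> 0 < B -> 0 < bt -> 0 < br ->
  A * K * br ^ 2 = L * (K + 1) * B * bt ^ 2 ->
  (bt / A <= br / B <-> br <= (K + 1) * L / K * bt).
Proof.
  intros HK HL HA HB Ht Hr E.
  assert (E1 : bt / A <= br / B <-> bt * B <= br * A).
  { split; intro H.
    - apply Rmult_le_compat_r with (r := A * B) in H; [|nra].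
      replace (bt / A * (A * B)) with (bt * B) in H by (field; lra).
      replace (br / B * (A * B)) with (br * A) in H by (field; lra). exact H.
    - apply Rmult_le_reg_r with (r := A * B); [nra|].
      replace (bt / A * (A * B)) with (bt * B) by (field; lra).
      replace (br / B * (A * B)) with (br * A) by (field; lra). exact H. }
  assert (E2 : br <= (K + 1) * L / K * bt <-> K * br <= L * (K + 1) * bt).
  { replace ((K + 1) * L / K * bt) with ((L * (K + 1) * bt) / K) by (field; lra).
    split; intro H.
    - apply Rmult_le_compat_l with (r := K) in H; [|lra].
      replace (K * (L * (K + 1) * bt / K)) with (L * (K + 1) * bt) in H by (field; lra). exact H.
    - apply Rmult_le_reg_l with (r := K); [lra|].
      replace (K * (L * (K + 1) * bt / K)) with (L * (K + 1) * bt) by (field; lra). exact H. }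
  rewrite E1, E2.
  assert (P : 0 < bt * B * br) by (apply Rmult_lt_0_compat; [apply Rmult_lt_0_compat|]; lra).
  split; intro H.
  - apply Rmult_le_reg_r with (r := bt * B * br); [exact P|].
    apply Rmult_le_compat_r with (r := K * br ^ 2) in H; [|apply Rlt_le, Rmult_lt_0_compat; [lra| apply pow_lt; lra]].
    replace (K * br * (bt * B * br)) with (bt * B * (K * br ^ 2)) by ring.
    replace (L * (K + 1) * bt * (bt * B * br)) with (br * (A * K * br ^ 2)) by (rewrite E; ring).
    nra.
  - apply Rmult_le_reg_r with (r := K * br ^ 2); [apply Rmult_lt_0_compat; [lra| apply pow_lt; lra]|].
    replace (br * A * (K * br ^ 2)) with (br * (A * K * br ^ 2)) by ring.
    rewrite E.
    apply Rmult_le_compat_r with (r := bt * B * br) in H; [|lra].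
    nra.
Qed.

Lemma pw_gt1 (g : R) : 0 < g -> 0 < Rpower 2 g - 1.
Proof.
  intro Hg. unfold Rpower.
  assert (0 < ln 2) by (rewrite <- ln_1; apply ln_increasing; lra).
  assert (1 < exp (g * ln 2)) by (rewrite <- exp_0; apply exp_increasing; nra).
  lra.
Qed.

Theorem lemma1 (alpha gt gr a b bt br Dt Dr : R) :
  2 <= alpha -> 0 < gt -> 0 < gr -> 0 < a -> 0 < b ->
  0 < bt -> 0 < br -> 0 < Dt -> 0 < Dr ->
  ((exists nu mu1 mu2 lam : R,
      0 < nu /\ 0 <= mu1 /\ 0 <= mu2 /\
      (Rpower 2 gt - 1) * mu1 * (a * Rpower Dt alpha / bt ^ 2) = lam /\
      (Rpower 2 gr - 1) * mu2 * (b * Rpower Dr alpha / br ^ 2) = lam /\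
      mu1 = nu /\
      mu2 = (Rpower 2 gt - 1) * mu1 + nu) ->
   (hgain bt a Dt alpha <= hgain br b Dr alpha <->
    br <= Rpower 2 gt * (Rpower 2 gr - 1) / (Rpower 2 gt - 1) * bt))
  /\
  ((exists nu mu1 mu2 lam : R,
      0 < nu /\ 0 <= mu1 /\ 0 <= mu2 /\
      (Rpower 2 gr - 1) * mu1 * (b * Rpower Dr alpha / br ^ 2) = lam /\
      (Rpower 2 gt - 1) * mu2 * (a * Rpower Dt alpha / bt ^ 2) = lam /\
      mu1 = nu /\
      mu2 = (Rpower 2 gr - 1) * mu1 + nu) ->
   (hgain bt a Dt alpha >= hgain br b Dr alpha <->
    bt <= Rpower 2 gr * (Rpower 2 gt - 1) / (Rpower 2 gr - 1) * br)).
Proof.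
  intros Ha Hgt Hgr Ha0 Hb0 Ht Hr HDt HDr.
  pose proof (pw_gt1 gt Hgt) as HK. pose proof (pw_gt1 gr Hgr) as HL.
  assert (HA : 0 < a * Rpower Dt alpha) by (apply Rmult_lt_0_compat; [lra| apply exp_pos]).
  assert (HB : 0 < b * Rpower Dr alpha) by (apply Rmult_lt_0_compat; [lra| apply exp_pos]).
  unfold hgain.
  set (K := Rpower 2 gt - 1) in *. set (L := Rpower 2 gr - 1) in *.
  assert (EK : Rpower 2 gt = K + 1) by (unfold K; ring).
  assert (EL : Rpower 2 gr = L + 1) by (unfold L; ring).
  rewrite EK, EL.
  set (A := a * Rpower Dt alpha) in *. set (B := b * Rpower Dr alpha) in *.
  split.
  - intros (nu & mu1 & mu2 & lam & Hnu & _ & _ & E1 & E2 & -> & ->).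
    apply key; try assumption.
    assert (E : K * nu * (A / bt ^ 2) = L * (K * nu + nu) * (B / br ^ 2)) by lra.
    assert (Hbt2 : 0 < bt ^ 2) by nra. assert (Hbr2 : 0 < br ^ 2) by nra.
    apply Rmult_eq_reg_r with (r := nu / (bt ^ 2 * br ^ 2)); [|apply Rgt_not_eq; apply Rdiv_lt_0_compat; nra].
    replace (A * K * br ^ 2 * (nu / (bt ^ 2 * br ^ 2))) with (K * nu * (A / bt ^ 2)) by (field; lra).
    rewrite E. field; lra.
  - intros (nu & mu1 & mu2 & lam & Hnu & _ & _ & E1 & E2 & -> & ->).
    assert (Hge : forall x y : R, x >= y <-> y <= x) by (intros; split; lra). rewrite Hge.
    apply key; try assumption.
    assert (E : L * nu * (B / br ^ 2) = K * (L * nu + nu) * (A / bt ^ 2)) by lra.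
    assert (Hbt2 : 0 < bt ^ 2) by nra. assert (Hbr2 : 0 < br ^ 2) by nra.
    apply Rmult_eq_reg_r with (r := nu / (bt ^ 2 * br ^ 2)); [|apply Rgt_not_eq; apply Rdiv_lt_0_compat; nra].
    replace (B * L * bt ^ 2 * (nu / (bt ^ 2 * br ^ 2))) with (L * nu * (B / br ^ 2)) by (field; lra).
    rewrite E. field; lra.
Qed.
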